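(* Let $M,K\ge 1$, let ${\bf U}^c\in\mathbb{C}^{M\times M}$ be unitary, and for $k=1,\dots,K$ let $\boldsymbol{\Lambda}_k\in\mathbb{R}^{M\times M}$ be diagonal with strictly positive diagonal entries. Set $\boldsymbol{\Sigma}_k={\bf U}^c\boldsymbol{\Lambda}_k({\bf U}^c)^{\sf H}$. Consider the problem $$\min_{{\bf U}}\; f({\bf U})=\sum_{m=1}^M\sum_{k=1}^K\log\big({\bf u}_m^{\sf H}\boldsymbol{\Sigma}_k{\bf u}_m\big)\quad\text{subject to}\quad {\bf u}_m^{\sf H}{\bf u}_n=\delta_{m,n}\ \ (m,n\in[M]),$$ where ${\bf u}_1,\dots,{\bf u}_M$ are the columns of ${\bf U}$. Then ${\bf U}^c$ is a global minimizer of this problem, i.e. $f({\bf U}^c)\le f({\bf U})$ for every unitary ${\bf U}\in\mathbb{C}^{M\times M}$.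
   Context: $[M]=\{1,\dots,M\}$, $\delta_{m,n}$ is the Kronecker delta, and ${}^{\sf H}$ denotes conjugate transpose. A matrix ${\bf U}$ is unitary if ${\bf U}^{\sf H}{\bf U}={\bf I}_M$. *)

(* Defs.v *)
From HB Require Import structures.
From mathcomp Require Import all_boot all_order all_algebra.
From mathcomp Require Import complex.
From mathcomp Require Import reals exp.
Set Implicit Arguments. Unset Strict Implicit. Unset Printing Implicit Defensive.
Import Order.TTheory GRing.Theory Num.Theory.
Local Open Scope ring_scope.
Local Open Scope complex_scope.

Definition mxH (R : rcfType) (m n : nat) (A : 'M[R[i]]_(m, n)) : 'M[R[i]]_(n, m) :=
  (map_mx (fun z => z^*) A)^T.

Definition unitary_mx (R : rcfType) (M : nat) (U : 'M[R[i]]_M) : Prop :=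
  mxH U *m U = 1%:M.

Definition Sigma (R : rcfType) (M : nat) (Uc : 'M[R[i]]_M) (Lam : 'M[R]_M)
  : 'M[R[i]]_M := Uc *m map_mx (fun x => x%:C) Lam *m mxH Uc.

Definition qform (R : rcfType) (M : nat) (S : 'M[R[i]]_M) (u : 'cV[R[i]]_M) : R[i] :=
  (mxH u *m S *m u) 0 0.

(* f(U) = sum_m sum_k log(u_m^H Sigma_k u_m); the quadratic form is real
   (Sigma_k Hermitian), we take its real part before applying ln. *)
Definition objf (R : realType) (M K : nat) (Uc : 'M[R[i]]_M)
  (Lam : 'I_K -> 'M[R]_M) (U : 'M[R[i]]_M) : R :=
  \sum_(m < M) \sum_(k < K) ln (complex.Re (qform (Sigma Uc (Lam k)) (col m U))).

(* Main.v *)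
Require Import Defs.
From HB Require Import structures.
From mathcomp Require Import all_boot all_order all_algebra.
From mathcomp Require Import complex.
From mathcomp Require Import reals exp.
From mathcomp Require Import ring.
Import Order.TTheory GRing.Theory Num.Theory.
Local Open Scope ring_scope.
Local Open Scope complex_scope.
Section M.
Variable R : realType.

Lemma ln_le_sub1 (y : R) : 0 < y -> ln y <= y - 1.
Proof.
move=> y0; have := expR_ge1Dx (ln y); rewrite lnK ?posrE //.
by rewrite lerBrDl addrC.
Qed.

Lemma sum_pos n (p l : 'I_n -> R) :
  (forall j, 0 <= p j) -> \sum_j p j = 1 -> (forall j, 0 < l j) ->
  0 < \sum_j p j * l j.
Proof.
move=> p0 p1 l0; rewrite lt_def sumr_ge0 ?andbT; last by move=> j _; rewrite mulr_ge0 // ltW.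
apply/negP => /eqP/psumr_eq0P H.
have : \sum_j p j = 0.
  apply: big1 => j _; have := H (fun i _ => mulr_ge0 (p0 i) (ltW (l0 i))) j isT => /eqP.
  by rewrite mulf_eq0 (gt_eqF (l0 j)) orbF => /eqP.
by rewrite p1 => /eqP; rewrite oner_eq0.
Qed.

Lemma jensen n (p l : 'I_n -> R) :
  (forall j, 0 <= p j) -> \sum_j p j = 1 -> (forall j, 0 < l j) ->
  \sum_j p j * ln (l j) <= ln (\sum_j p j * l j).
Proof.
move=> p0 p1 l0; have S0 := @sum_pos _ p l p0 p1 l0.
set S := \sum_j p j * l j in S0 *.
rewrite -subr_le0.
have -> : \sum_j p j * ln (l j) - ln S = \sum_j p j * ln (l j / S).
  rewrite -[ln S]mul1r -p1 mulr_suml -sumrB; apply: eq_bigr => j _.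
  by rewrite ln_div ?posrE // mulrBr.
apply: (le_trans (y := \sum_j p j * (l j / S - 1))).
  by apply: ler_sum => j _; rewrite ler_wpM2l // ln_le_sub1 // divr_gt0.
rewrite (eq_bigr (fun j => p j * l j / S - p j)); last first.
  by move=> j _; rewrite mulrBr mulr1 mulrA.
by rewrite sumrB -mulr_suml p1 divff ?gt_eqF // subrr.
Qed.

Lemma mxH_mul m n p (A : 'M[R[i]]_(m, n)) (B : 'M[R[i]]_(n, p)) :
  mxH (A *m B) = mxH B *m mxH A.
Proof. by rewrite /mxH map_mxM trmx_mul. Qed.

Lemma mxHK m n (A : 'M[R[i]]_(m, n)) : mxH (mxH A) = A.
Proof. by apply/matrixP => i j; rewrite !mxE conjcK. Qed.

Lemma col_mul m n p (A : 'M[R[i]]_(m, n)) (B : 'M[R[i]]_(n, p)) j :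
  A *m col j B = col j (A *m B).
Proof. by apply/matrixP => a b; rewrite !mxE; apply: eq_bigr => l _; rewrite !mxE. Qed.

Lemma Re_sum n (F : 'I_n -> R[i]) : complex.Re (\sum_j F j) = \sum_j complex.Re (F j).
Proof.
by apply: (big_morph (@complex.Re R)) => // -[a b] [c d].
Qed.

Lemma Re_term (l : R) (z : R[i]) : complex.Re (z^* * l%:C * z) = l * complex.Re (z^* * z).
Proof. by case: z => a b /=; ring. Qed.

Lemma Re_nsq_ge0 (z : R[i]) : 0 <= complex.Re (z^* * z).
Proof.
case: z => a b /=.
have E : forall x : R, x = a^+2 + b^+2 -> 0 <= x by move=> x ->; rewrite addr_ge0 // sqr_ge0.
by apply: E; ring.
Qed.

Lemma qform_eq M (Uc : 'M[R[i]]_M) (L : 'M[R]_M) (hd : is_diag_mx L) U (m : 'I_M) :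
  complex.Re (qform (Sigma Uc L) (col m U)) =
  \sum_j complex.Re (((mxH Uc *m U) j m)^* * (mxH Uc *m U) j m) * L j j.
Proof.
rewrite /qform /Sigma !mulmxA -[mxH (col m U) *m Uc]mxHK mxH_mul mxHK -mulmxA col_mul.
set w := col m (mxH Uc *m U).
rewrite mxE Re_sum; apply: eq_bigr => j _.
rewrite mxE (bigD1 j) //= big1 ?addr0.
  by rewrite !mxE Re_term mulrC.
move=> l ne; rewrite !mxE (is_diag_mxP hd l j ne) ?mul0r ?mulr0 //.
Qed.

Lemma objf_eq M K (Uc : 'M[R[i]]_M) (Lam : 'I_K -> 'M[R]_M)
  (hdiag : forall k, is_diag_mx (Lam k)) U :
  objf Uc Lam U = \sum_(m < M) \sum_(k < K)
    ln (\sum_j complex.Re (((mxH Uc *m U) j m)^* * (mxH Uc *m U) j m) * Lam k j j).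
Proof.
by apply: eq_bigr => m _; apply: eq_bigr => k _; rewrite qform_eq.
Qed.
End M.

Theorem theorem1 (R : realType) (M K : nat) (hM : (1 <= M)%N) (hK : (1 <= K)%N)
  (Uc : 'M[R[i]]_M) (hUc : unitary_mx Uc)
  (Lam : 'I_K -> 'M[R]_M)
  (hdiag : forall k, is_diag_mx (Lam k))
  (hpos : forall k (j : 'I_M), 0 < Lam k j j)
  (U : 'M[R[i]]_M) (hU : unitary_mx U) :
  objf Uc Lam Uc <= objf Uc Lam U.
Proof.
have hUc' : Uc *m mxH Uc = 1%:M by apply: mulmx1C.
have hU' : U *m mxH U = 1%:M by apply: mulmx1C.
rewrite !objf_eq // hUc.
have HV1 : mxH (mxH Uc *m U) *m (mxH Uc *m U) = 1%:M.
  by rewrite mxH_mul mxHK mulmxA -(mulmxA (mxH U)) hUc' mulmx1 hU.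
have HV2 : (mxH Uc *m U) *m mxH (mxH Uc *m U) = 1%:M.
  by rewrite mxH_mul mxHK !mulmxA -(mulmxA _ U) hU' mulmx1 hUc.
move: (mxH Uc *m U) HV1 HV2 => V HV1 HV2.
set p := fun j m => complex.Re ((V j m)^* * V j m).
have p0 : forall j m, 0 <= p j m by move=> j m; apply: Re_nsq_ge0.
have pc : forall m, \sum_j p j m = 1.
  move=> m0; have := congr1 (fun A : 'M[R[i]]_M => complex.Re (A m0 m0)) HV1.
  rewrite /= !mxE eqxx /= Re_sum => <-.
  apply: eq_bigr => j _; by rewrite /p !mxE.
have pr : forall j, \sum_m p j m = 1.
  move=> j0; have := congr1 (fun A : 'M[R[i]]_M => complex.Re (A j0 j0)) HV2.
  rewrite /= !mxE eqxx /= Re_sum => <-; apply: eq_bigr => m _; by rewrite /p !mxE mulrC.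
have E1 : forall (m : 'I_M) k, \sum_j complex.Re (((1%:M : 'M[R[i]]_M) j m)^* * (1%:M : 'M[R[i]]_M) j m) * Lam k j j = Lam k m m.
  move=> m k; rewrite (bigD1 m) //= big1 ?addr0; first by rewrite !mxE eqxx /= mul1r mulr0 subr0 mul1r.
  by move=> j ne; rewrite !mxE (negbTE ne) /= mul0r mulr0 subr0 mul0r.
under eq_bigr do under eq_bigr do rewrite E1.
rewrite exchange_big [X in _ <= X]exchange_big /=; apply: ler_sum => k _.
have -> : \sum_(m < M) ln (Lam k m m) = \sum_(m < M) \sum_j p j m * ln (Lam k j j).
  rewrite exchange_big /=; apply: eq_bigr => j _.
  by rewrite -mulr_suml pr mul1r.
apply: ler_sum => m _; apply: (@jensen R M (fun j => p j m) (fun j => Lam k j j)) => //.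
Qed.
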